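(* Let $D$ be a discrete space, $M$ a Hausdorff space, $\pi:D\to M$ any map, and $\kappa$ a cardinal. If the power $M^\kappa$ is countably compact, then the power $(D\cup_\pi M)^\kappa$ is countably compact.
   Context: For a discrete space $D$: if $D$ is infinite, $\alpha D=D\cup\{\infty\}$ denotes its one-point (Aleksandrov) compactification; if $D$ is finite, $\alpha D=D\cup\{\infty\}$ is the topological sum of $D$ and a singleton $\{\infty\}$ with $\infty\notin D$. For a map $\pi:D\to M$ into a $T_1$ space $M$, $D\cup_\pi M$ is the subspace $\{(x,\pi(x)):x\in D\}\cup(\{\infty\}\times M)$ of $\alpha D\times M$. A space is countably compact if every countable open cover has a finite subcover. *)

(* Defs.v *)
From Stdlib Require Import List Arith.
Set Implicit Arguments.

Definition is_topology {X : Type} (O : (X -> Prop) -> Prop) : Prop :=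
  O (fun _ => True) /\
  (forall (I : Type) (F : I -> X -> Prop),
      (forall i, O (F i)) -> O (fun x => exists i, F i x)) /\
  (forall A B : X -> Prop, O A -> O B -> O (fun x => A x /\ B x)).

Definition hausdorff {X : Type} (O : (X -> Prop) -> Prop) : Prop :=
  forall x y : X, x <> y ->
    exists U V : X -> Prop, O U /\ O V /\ U x /\ V y /\ (forall z, ~ (U z /\ V z)).

(* Every countable open cover has a finite subcover.  Countable covers are
   indexed by nat (finite nonempty covers can be padded by repetition). *)
Definition countably_compact {X : Type} (O : (X -> Prop) -> Prop) : Prop :=
  forall U : nat -> X -> Prop,
    (forall n, O (U n)) -> (forall x, exists n, U n x) ->
    exists N, forall x, exists n, n < N /\ U n x.

(* alpha D = D + {oo} (oo = None): for D infinite this is the one-point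
   compactification of the discrete space D; for D finite it is the
   topological sum of D and the isolated point oo. *)
Definition alpha_open (D : Type) (U : option D -> Prop) : Prop :=
  U None -> exists l : list D, forall d : D, ~ U (Some d) -> In d l.

Definition prod_open {X Y : Type} (OX : (X -> Prop) -> Prop) (OY : (Y -> Prop) -> Prop)
  (U : X * Y -> Prop) : Prop :=
  forall p, U p -> exists (A : X -> Prop) (B : Y -> Prop),
    OX A /\ OY B /\ A (fst p) /\ B (snd p) /\ (forall q, A (fst q) -> B (snd q) -> U q).

Definition subspace_open {X : Type} (O : (X -> Prop) -> Prop) (P : X -> Prop)
  (U : {x : X | P x} -> Prop) : Prop :=
  exists V : X -> Prop, O V /\ forall s, U s <-> V (proj1_sig s).

Definition power_open (K : Type) {X : Type} (O : (X -> Prop) -> Prop)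
  (U : (K -> X) -> Prop) : Prop :=
  forall f, U f -> exists (l : list K) (V : K -> X -> Prop),
    (forall k, O (V k)) /\ (forall k, V k (f k)) /\
    (forall g, (forall k, In k l -> V k (g k)) -> U g).

(* D \cup_pi M : the subspace {(x, pi x) : x in D} \cup ({oo} x M) of alpha D x M. *)
Definition adj_pred {D M : Type} (pi : D -> M) (p : option D * M) : Prop :=
  match fst p with
  | Some d => snd p = pi d
  | None => True
  end.

Definition adj_space {D M : Type} (pi : D -> M) : Type := {p : option D * M | adj_pred pi p}.

Definition adj_open {D M : Type} (OM : (M -> Prop) -> Prop) (pi : D -> M)
  : (adj_space pi -> Prop) -> Prop :=
  subspace_open (prod_open (@alpha_open D) OM) (adj_pred pi).
Arguments power_open K {X} O U.
Arguments adj_open {D M} OM pi U.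

(* Main.v *)
Require Import Defs.
From Stdlib Require Import List Arith Classical ClassicalEpsilon FunctionalExtensionality PropExtensionality Lia.

Definition nset := nat -> Prop.
Definition fam := nset -> Prop.
Definition le (x y : fam) := forall A, x A -> y A.
Definition Union (F0 : fam) (C : fam -> Prop) : fam := fun A => F0 A \/ exists x, C x /\ x A.

Inductive tower (F0 : fam) (succ : fam -> fam) : fam -> Prop :=
| tw_succ : forall x, tower F0 succ x -> tower F0 succ (succ x)
| tw_sup : forall C : fam -> Prop, (forall x, C x -> tower F0 succ x) -> tower F0 succ (Union F0 C).

Lemma le_ext (x y : fam) : le x y -> le y x -> x = y.
Proof. intros H1 H2. apply functional_extensionality; intro A.
  apply propositional_extensionality; split; auto. Qed.

Lemma tower_F0 F0 succ (infl : forall x, le x (succ x)) x : tower F0 succ x -> le F0 x.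
Proof. induction 1. - intros A HA. apply infl; auto. - intros A HA; left; auto. Qed.

Definition extreme F0 succ (c : fam) := forall x, tower F0 succ x -> le x c -> ~ le c x -> le (succ x) c.

Lemma lemA F0 succ (infl : forall x, le x (succ x)) c : tower F0 succ c -> extreme F0 succ c ->
  forall x, tower F0 succ x -> le x c \/ le (succ c) x.
Proof.
  intros Tc Ec x Tx. induction Tx as [x Tx IH | C HC IH].
  - destruct IH as [H|H].
    + destruct (classic (le c x)) as [H'|H'].
      * right. rewrite (le_ext _ _ H H'). intros A HA; exact HA.
      * left. apply Ec; auto.
    + right. intros A HA. apply infl, H, HA.
  - destruct (classic (exists y, C y /\ le (succ c) y)) as [[y [Cy Hy]]|Hn].
    + right. intros A HA. right. exists y. split; auto.
    + left. intros A [HA|[y [Cy Hy]]].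
      * apply (tower_F0 _ _ infl c Tc); auto.
      * destruct (IH y Cy) as [H|H]; [apply H; auto|].
        exfalso; apply Hn; exists y; auto.
Qed.

Lemma lemB F0 succ (infl : forall x, le x (succ x)) c : tower F0 succ c -> extreme F0 succ c.
Proof.
  induction 1 as [c Tc IH | C HC IH].
  - intros x Tx H1 H2.
    destruct (lemA F0 succ infl c Tc IH x Tx) as [H|H]; [|contradiction].
    destruct (classic (le c x)) as [H'|H'].
    + rewrite (le_ext _ _ H H'). intros A HA; exact HA.
    + intros A HA. apply infl. apply (IH x Tx H H'); auto.
  - intros x Tx H1 H2.
    assert (exists y, C y /\ ~ le y x) as [y [Cy Hy]].
    { apply NNPP; intro Hn. apply H2. intros A [HA|[y [Cy Hy]]].
      - apply (tower_F0 _ _ infl x Tx); auto.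
      - apply NNPP; intro HxA. apply Hn. exists y; split; [auto|]. intro Hle; apply HxA; auto. }

    destruct (lemA F0 succ infl y (HC y Cy) (IH y Cy) x Tx) as [H|H].
    + intros A HA. right. exists y. split; auto. apply (IH y Cy x Tx H Hy); auto.
    + exfalso; apply Hy. intros A HA; apply H, infl, HA.
Qed.

Lemma tower_chain F0 succ (infl : forall x, le x (succ x)) x y :
  tower F0 succ x -> tower F0 succ y -> le x y \/ le y x.
Proof.
  intros Tx Ty. destruct (lemA F0 succ infl y Ty (lemB F0 succ infl y Ty) x Tx) as [H|H]; auto.
  right. intros A HA; apply H, infl, HA.
Qed.

Definition pfilter (p : fam) :=
  (forall A B : nset, p A -> (forall n, A n -> B n) -> p B) /\
  (forall A B : nset, p A -> p B -> p (fun n => A n /\ B n)) /\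
  (forall A, p A -> exists n, A n).

Definition succP (x y : fam) : Prop :=
  (pfilter x -> pfilter y) /\ le x y /\
  ((exists y', pfilter y' /\ le x y' /\ ~ le y' x) -> pfilter y /\ ~ le y x).

Lemma succP_ex x : exists y, succP x y.
Proof.
  destruct (classic (exists y', pfilter y' /\ le x y' /\ ~ le y' x)) as [[y' [H1 [H2 H3]]]|Hn].
  - exists y'. split; [auto|split; auto].
  - exists x. split; [auto|split]; [intros A HA; auto|]. intro H; contradiction.
Qed.

Definition fsucc (x : fam) : fam := epsilon (inhabits x) (succP x).
Lemma fsucc_spec x : succP x (fsucc x).
Proof. unfold fsucc. apply epsilon_spec. apply succP_ex. Qed.
Lemma fsucc_infl x : le x (fsucc x).
Proof. apply (proj1 (proj2 (fsucc_spec x))). Qed.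

Lemma tower_pfilter F0 : pfilter F0 -> forall x, tower F0 fsucc x -> pfilter x.
Proof.
  intros P0 x Tx. induction Tx as [x Tx IH | C HC IH].
  - destruct (fsucc_spec x) as [H _]; auto.
  - destruct P0 as [U0 [I0 N0]]. split; [|split].
    + intros A B [HA|[y [Cy Hy]]] HAB.
      * left; eauto.
      * right; exists y; split; auto. destruct (IH y Cy) as [U _]; eauto.
    + intros A B [HA|[y [Cy Hy]]] [HB|[z [Cz Hz]]].
      * left; auto.
      * right; exists z; split; auto. apply (IH z Cz); auto.
        apply (tower_F0 _ _ fsucc_infl z (HC z Cz)); auto.
      * right; exists y; split; auto. apply (IH y Cy); auto.
        apply (tower_F0 _ _ fsucc_infl y (HC y Cy)); auto.
      * destruct (tower_chain F0 fsucc fsucc_infl y z (HC y Cy) (HC z Cz)) as [H|H].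
        -- right; exists z; split; auto. apply (IH z Cz); auto.
        -- right; exists y; split; auto. apply (IH y Cy); auto.
    + intros A [HA|[y [Cy Hy]]]; [auto|]. apply (IH y Cy); auto.
Qed.

Lemma ultra_exists (F0 : fam) : pfilter F0 -> F0 (fun _ => True) ->
  exists p, pfilter p /\ le F0 p /\ (forall S : nset, p S \/ p (fun n => ~ S n)).
Proof.
  intros P0 T0.
  set (Z := Union F0 (tower F0 fsucc)).
  assert (TZ : tower F0 fsucc Z) by (apply tw_sup; auto).
  assert (PZ : pfilter Z) by (apply (tower_pfilter F0 P0); auto).
  assert (Mx : forall y, pfilter y -> le Z y -> le y Z).
  { intros y Py Hy. apply NNPP; intro Hn.
    destruct (fsucc_spec Z) as [_ [_ H]].
    destruct H as [_ H]; [exists y; auto|].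
    apply H. intros A HA. right. exists (fsucc Z). split; auto. apply tw_succ; auto. }
  exists Z. split; [auto|split]; [intros A HA; left; auto|].
  intro S. destruct (classic (Z (fun n => ~ S n))) as [H|H]; [right; auto|left].
  destruct PZ as [UZ [IZ NZ]].
  set (y := fun A : nset => exists B, Z B /\ forall n, B n -> S n -> A n).
  assert (Py : pfilter y).
  { split; [|split].
    - intros A B [C [HC HC']] HAB. exists C; split; auto.
    - intros A B [C [HC HC']] [E [HE HE']]. exists (fun n => C n /\ E n). split; auto.
      intros n [] Sn; split; auto.
    - intros A [C [HC HC']]. apply NNPP; intro Hn. apply H.
      apply (UZ C); auto. intros n Cn Sn. apply Hn. exists n; auto. }
  apply (Mx y Py).
  - intros A HA. exists A; split; auto.
  - exists (fun _ => True). split; auto. left; auto.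
Qed.

Lemma O_ext {X : Type} (O : (X -> Prop) -> Prop) (A B : X -> Prop) :
  O A -> (forall x, A x <-> B x) -> O B.
Proof.
  intros HA H. replace B with A; auto.
  apply functional_extensionality; intro x; apply propositional_extensionality; auto.
Qed.

Definition cluster {Y : Type} (O : (Y -> Prop) -> Prop) (h : nat -> Y) (g : Y) :=
  forall W, O W -> W g -> forall n, exists N, n <= N /\ W (h N).

Lemma cc_cluster (K M : Type) (OM : (M -> Prop) -> Prop) :
  countably_compact (power_open K OM) ->
  forall h : nat -> K -> M, exists g, cluster (power_open K OM) h g.
Proof.
  intros CC h. apply NNPP; intro Hn.
  set (U := fun n (f : K -> M) => exists W, power_open K OM W /\ W f /\
              forall N, n <= N -> ~ W (h N)).
  destruct (CC U) as [N HN].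
  - intros n f [W [HW [Wf HN]]].
    destruct (HW f Wf) as [l [V [H1 [H2 H3]]]].
    exists l, V. split; [auto|split; auto]. intros g Hg. exists W. split; auto.
  - intro f. apply NNPP; intro Hf. apply Hn. exists f.
    intros W HW Wf n. apply NNPP; intro Hc. apply Hf. exists n, W.
    split; [auto|split; auto]. intros N HnN HW'. apply Hc. exists N; auto.
  - destruct (HN (h N)) as [n [Hlt [W [_ [Wh HW]]]]].
    apply (HW N); auto. apply Nat.lt_le_incl; auto.
Qed.

Lemma cluster_cc {Y : Type} (O : (Y -> Prop) -> Prop) :
  (forall h : nat -> Y, exists g, cluster O h g) -> countably_compact O.
Proof.
  intros Hc U HO Hcov. apply NNPP; intro Hn.
  assert (Ex : forall N, exists f, forall n, n < N -> ~ U n f).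
  { intro N. apply NNPP; intro HN. apply Hn. exists N. intro x.
    apply NNPP; intro Hx. apply HN. exists x. intros n Hlt Hu. apply Hx. eauto. }
  destruct (Ex 0) as [y0 _].
  set (h := fun N => epsilon (inhabits y0) (fun f => forall n, n < N -> ~ U n f)).
  assert (Hh : forall N n, n < N -> ~ U n (h N)).
  { intros N. unfold h. apply epsilon_spec. apply Ex. }
  destruct (Hc h) as [g Hg].
  destruct (Hcov g) as [n Hn'].
  destruct (Hg (U n) (HO n) Hn' (S n)) as [N [HN HU]].
  apply (Hh N n); auto.
Qed.

Lemma power_open_full (K M : Type) (OM : (M -> Prop) -> Prop) :
  is_topology OM -> power_open K OM (fun _ => True).
Proof.
  intros [T _] f _. exists nil, (fun _ _ => True). split; [auto|split; auto].
Qed.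

Lemma power_open_inter (K M : Type) (OM : (M -> Prop) -> Prop) W1 W2 :
  is_topology OM -> power_open K OM W1 -> power_open K OM W2 ->
  power_open K OM (fun f => W1 f /\ W2 f).
Proof.
  intros [_ [_ TI]] H1 H2 f [F1 F2].
  destruct (H1 f F1) as [l1 [V1 [A1 [B1 C1]]]].
  destruct (H2 f F2) as [l2 [V2 [A2 [B2 C2]]]].
  exists (l1 ++ l2), (fun k x => V1 k x /\ V2 k x). split; [|split].
  - intro k. apply TI; auto.
  - intro k; auto.
  - intros g Hg. split.
    + apply C1. intros k Hk. apply (Hg k). apply in_or_app; auto.
    + apply C2. intros k Hk. apply (Hg k). apply in_or_app; auto.
Qed.

Lemma power_open_coord (K M : Type) (OM : (M -> Prop) -> Prop) (k : K) (B : M -> Prop) :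
  is_topology OM -> OM B -> power_open K OM (fun f => B (f k)).
Proof.
  intros [T _] OB f Hf. exists (k :: nil), (fun k' x => k' = k -> B x). split; [|split].
  - intro k'. destruct (classic (k' = k)) as [E|E].
    + subst. apply (O_ext OM B); auto. intro x; split; auto.
    + apply (O_ext OM (fun _ => True)); auto. intro x; split; auto. intros _ E'; contradiction.
  - intros k' E; subst; auto.
  - intros g Hg. apply (Hg k); simpl; auto.
Qed.

Lemma main_cluster (D M : Type) (OM : (M -> Prop) -> Prop) (pi : D -> M) (K : Type) :
  is_topology OM -> countably_compact (power_open K OM) ->
  forall f : nat -> K -> adj_space pi, exists G, cluster (power_open K (adj_open OM pi)) f G.
Proof.
  intros Top CC f.
  set (h := fun N k => snd (proj1_sig (f N k))).
  destruct (cc_cluster K M OM CC h) as [g Hg].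
  set (F0 := fun A : nset => exists n W, power_open K OM W /\ W g /\
               forall N, n <= N -> W (h N) -> A N).
  assert (P0 : pfilter F0).
  { split; [|split].
    - intros A B [n [W [HW [Wg HA]]]] HAB. exists n, W. split; [auto|split; auto].
    - intros A B [n1 [W1 [HW1 [Wg1 HA]]]] [n2 [W2 [HW2 [Wg2 HB]]]].
      exists (max n1 n2), (fun f => W1 f /\ W2 f). split; [apply power_open_inter; auto|split; auto].
      intros N HN [H1 H2]. split; [apply HA|apply HB]; auto; lia.
    - intros A [n [W [HW [Wg HA]]]]. destruct (Hg W HW Wg n) as [N [HN HW']].
      exists N; auto. }
  assert (T0 : F0 (fun _ => True)).
  { exists 0, (fun _ => True). split; [apply power_open_full; auto|split; auto]. }
  destruct (ultra_exists F0 P0 T0) as [p [Pp [Lp Up]]].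
  destruct Pp as [Uc [Ic Nc]].
  assert (pT : p (fun _ => True)) by auto.
  set (P := fun k d => p (fun N => fst (proj1_sig (f N k)) = Some d)).
  set (spec := fun k (x : adj_space pi) =>
     (exists d, P k d /\ proj1_sig x = (Some d, pi d)) \/
     ((~ exists d, P k d) /\ proj1_sig x = (None, g k))).
  assert (inh : forall k : K, inhabited (adj_space pi)).
  { intro k. constructor. exists (None, g k). exact I. }
  set (G := fun k => epsilon (inh k) (spec k)).
  assert (HG : forall k, spec k (G k)).
  { intro k. unfold G. apply epsilon_spec.
    destruct (classic (exists d, P k d)) as [[d Hd]|Hn].
    - assert (Hp : adj_pred pi (Some d, pi d)) by (simpl; reflexivity).
      exists (exist _ (Some d, pi d) Hp). left. exists d; split; auto.
    - exists (exist (adj_pred pi) (None, g k) I). right. split; auto. }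
  assert (Hco : forall k (Vk : adj_space pi -> Prop), adj_open OM pi Vk -> Vk (G k) ->
                  p (fun N => Vk (f N k))).
  { intros k Vk [Vo [HVo HV]] VG. apply HV in VG.
    destruct (HG k) as [[d [Hd E]]|[Hn E]]; rewrite E in VG.
    - apply (Uc _ _ Hd). intros N HN. apply HV.
      destruct (f N k) as [[o m] Hp]. simpl in *. subst o. unfold adj_pred in Hp; simpl in Hp. subst m. exact VG.
    - destruct (HVo _ VG) as [A [B [OA [OB [AN [Bg HAB]]]]]].
      simpl in AN, Bg. destruct (OA AN) as [L HL].
      assert (HL' : p (fun N => forall d, In d L -> fst (proj1_sig (f N k)) <> Some d)).
      { clear HL. induction L as [|d L IH].
        - apply (Uc _ _ pT). intros N _ d [].
        - destruct (Up (fun N => fst (proj1_sig (f N k)) = Some d)) as [Hd|Hd].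
          + exfalso; apply Hn; exists d; exact Hd.
          + apply (Uc _ _ (Ic _ _ Hd IH)). intros N [H1 H2] d' [E'|E'].
            * subst d'. exact H1.
            * apply H2; auto. }
      assert (HB : p (fun N => B (h N k))).
      { apply Lp. exists 0, (fun f => B (f k)). split; [apply power_open_coord; auto|split; auto]. }
      apply (Uc _ _ (Ic _ _ HL' HB)). intros N [H1 H2]. apply HV. apply HAB; [|exact H2].
      destruct (fst (proj1_sig (f N k))) as [d|] eqn:Ef; [|exact AN].
      apply NNPP; intro HA. apply (H1 d (HL d HA)). reflexivity. }
  exists G. intros W HW WG n.
  destruct (HW G WG) as [l [V [OV [VG HWl]]]].
  assert (Hl : p (fun N => forall k, In k l -> V k (f N k))).
  { clear HWl. induction l as [|k l IH].
    - apply (Uc _ _ pT). intros N _ k [].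
    - apply (Uc _ _ (Ic _ _ (Hco k (V k) (OV k) (VG k)) IH)).
      intros N [H1 H2] k' [E|E]; [subst; auto|auto]. }
  assert (Hn : p (fun N => n <= N)).
  { apply Lp. exists n, (fun _ => True). split; [apply power_open_full; auto|split; auto]. }
  destruct (Nc _ (Ic _ _ Hn Hl)) as [N [H1 H2]]. exists N. split; auto.
Qed.

Theorem proposition1p4 (D M : Type) (OM : (M -> Prop) -> Prop) (pi : D -> M) (K : Type) :
  is_topology OM -> hausdorff OM ->
  countably_compact (power_open K OM) ->
  countably_compact (power_open K (adj_open OM pi)).
Proof.
  intros Top _ CC. apply cluster_cc. apply main_cluster; auto.
Qed.
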